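(* For every integer $R\ge1$, $$\pi-\Vert T_R\Vert=\inf_{\phi\in E(R)}\int_0^{2\pi}x\,|\phi(x)|^2\,dx,$$ where $E(R)$ is the set of functions $\phi(x)=\frac{1}{\sqrt{2\pi}}\sum_{n=1}^R u_ne^{i(n-1)x}$ with $\mathbf{u}\in\mathbb{C}^R$, $\sum_{n=1}^R|u_n|^2=1$.
   Context: $T_R$ is the $R\times R$ matrix with $(T_R)_{m,n}=0$ if $m=n$ and $(T_R)_{m,n}=\frac{1}{m-n}$ if $m\ne n$, $1\le m,n\le R$. $\Vert\cdot\Vert$ is the operator norm induced by the Euclidean norm. *)

(* Defs.v *)
From Stdlib Require Import Reals Lra.
Open Scope R_scope.

(* rsum f N = f 0 + ... + f (N-1)  (N terms). Index k (0-based) stands for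
   the paper's index n = k+1. *)
Fixpoint rsum (f : nat -> R) (N : nat) : R :=
  match N with
  | O => 0
  | S k => rsum f k + f k
  end.

(* Entries of T_R: 0 on the diagonal, 1/(m-n) off it (0-based indices give the
   same differences m-n as the 1-based ones). *)
Definition Tentry (m n : nat) : R :=
  if Nat.eq_dec m n then 0 else / (INR m - INR n).

Definition Tapply (N : nat) (v : nat -> R) (m : nat) : R :=
  rsum (fun n => Tentry m n * v n) N.

Definition enorm (N : nat) (v : nat -> R) : R := sqrt (rsum (fun k => v k ^ 2) N).

(* { ||T_N v|| : v in R^N, ||v|| = 1 } ; the operator norm is its supremum *)
Definition opnorm_set (N : nat) (r : R) : Prop :=
  exists v : nat -> R, enorm N v = 1 /\ r = enorm N (Tapply N v).

(* phi(x) = (2 pi)^(-1/2) sum_{k<N} u_k e^{i k x}, with u_k = a_k + i b_k;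
   real and imaginary parts. *)
Definition phi_re (N : nat) (a b : nat -> R) (x : R) : R :=
  / sqrt (2 * PI) * rsum (fun k => a k * cos (INR k * x) - b k * sin (INR k * x)) N.
Definition phi_im (N : nat) (a b : nat -> R) (x : R) : R :=
  / sqrt (2 * PI) * rsum (fun k => a k * sin (INR k * x) + b k * cos (INR k * x)) N.

Definition phi_abs2 (N : nat) (a b : nat -> R) (x : R) : R :=
  phi_re N a b x ^ 2 + phi_im N a b x ^ 2.

Definition energy_set (N : nat) (r : R) : Prop :=
  exists a b : nat -> R,
    rsum (fun k => a k ^ 2 + b k ^ 2) N = 1 /\
    exists pr : Riemann_integrable (fun x => x * phi_abs2 N a b x) 0 (2 * PI),
      r = RiemannInt pr.

Definition is_glb (E : R -> Prop) (m : R) : Prop :=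
  (forall x, E x -> m <= x) /\ (forall b, (forall x, E x -> b <= x) -> b <= m).

(* Main.v *)
From Coquelicot Require Import Coquelicot.
Require Import Defs.
From Stdlib Require Import Reals Lra Lia.
Open Scope R_scope.

Lemma rsum_ext f g N : (forall k, (k < N)%nat -> f k = g k) -> rsum f N = rsum g N.
Proof. induction N; simpl; intros H; [reflexivity|]. rewrite IHN by (intros; apply H; lia). rewrite H by lia. reflexivity. Qed.

Lemma rsum_plus f g N : rsum (fun k => f k + g k) N = rsum f N + rsum g N.
Proof. induction N; simpl; [ring|]. rewrite IHN; ring. Qed.

Lemma rsum_minus f g N : rsum (fun k => f k - g k) N = rsum f N - rsum g N.
Proof. induction N; simpl; [ring|]. rewrite IHN; ring. Qed.

Lemma rsum_mult_l c f N : c * rsum f N = rsum (fun k => c * f k) N.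
Proof. induction N; simpl; [ring|]. rewrite <- IHN; ring. Qed.

Lemma rsum_mult_r c f N : rsum f N * c = rsum (fun k => f k * c) N.
Proof. induction N; simpl; [ring|]. rewrite <- IHN; ring. Qed.

Lemma rsum_zero f N : (forall k, (k < N)%nat -> f k = 0) -> rsum f N = 0.
Proof. intros H. rewrite (rsum_ext f (fun _ => 0)) by exact H. clear H. induction N; simpl; [ring|]. rewrite IHN; ring. Qed.

Lemma rsum_le f g N : (forall k, (k < N)%nat -> f k <= g k) -> rsum f N <= rsum g N.
Proof. induction N; simpl; intros H; [lra|]. pose proof (H N ltac:(lia)). pose proof (IHN ltac:(intros; apply H; lia)). lra. Qed.

Lemma rsum_nonneg f N : (forall k, (k < N)%nat -> 0 <= f k) -> 0 <= rsum f N.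
Proof. intros H. rewrite <- (rsum_zero (fun _ => 0) N) by auto. apply rsum_le; auto. Qed.

Lemma rsum_nonneg_zero f N : (forall k, (k < N)%nat -> 0 <= f k) -> rsum f N = 0 ->
  forall k, (k < N)%nat -> f k = 0.
Proof.
  induction N; simpl; intros H H0 k Hk; [lia|].
  pose proof (rsum_nonneg f N ltac:(intros; apply H; lia)). pose proof (H N ltac:(lia)).
  destruct (Nat.eq_dec k N) as [->|]; [lra|]. apply IHN; [intros; apply H; lia|lra|lia].
Qed.

Lemma rsum_prod f g N : rsum f N * rsum g N = rsum (fun m => rsum (fun n => f m * g n) N) N.
Proof. rewrite rsum_mult_r. apply rsum_ext; intros. apply rsum_mult_l. Qed.

Lemma rsum_swap F N M : rsum (fun m => rsum (fun n => F m n) N) M = rsum (fun n => rsum (fun m => F m n) M) N.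
Proof. induction M; simpl. - symmetry; apply rsum_zero; auto. - rewrite IHM, <- rsum_plus. reflexivity. Qed.

Lemma rsum_diag f N m : (m < N)%nat -> rsum (fun n => if Nat.eq_dec m n then f n else 0) N = f m.
Proof.
  induction N; intros H; [lia|]. simpl. destruct (Nat.eq_dec m N) as [->|].
  - rewrite rsum_zero; [ring|]. intros k Hk. destruct (Nat.eq_dec N k); [lia|auto].
  - rewrite IHN by lia. ring.
Qed.

Lemma sin2k k : sin (2 * INR k * PI) = 0.
Proof. pose proof (sin_period 0 k). rewrite Rplus_0_l, sin_0 in H. exact H. Qed.
Lemma cos2k k : cos (2 * INR k * PI) = 1.
Proof. pose proof (cos_period 0 k). rewrite Rplus_0_l, cos_0 in H. exact H. Qed.

Lemma INR_neq m n : m <> n -> INR m - INR n <> 0.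
Proof. intros H H'. apply H. apply INR_eq. lra. Qed.

Lemma FTC (F df : R -> R) a b v :
  (forall x, Rmin a b <= x <= Rmax a b -> is_derive F x (df x)) ->
  (forall x, Rmin a b <= x <= Rmax a b -> continuous df x) ->
  v = F b - F a -> is_RInt df a b v.
Proof. intros H1 H2 ->. exact (is_RInt_derive F df a b H1 H2). Qed.

Lemma int_prim (m n : nat) (A B : R) :
  is_RInt (fun x => x * (A * cos ((INR m - INR n) * x) + B * sin ((INR m - INR n) * x))) 0 (2 * PI)
    ((if Nat.eq_dec m n then 2 * PI ^ 2 * A else 0) - 2 * PI * B * Tentry m n).
Proof.
  unfold Tentry. destruct (Nat.eq_dec m n) as [<-|Hmn].
  - apply (is_RInt_ext (V := R_NormedModule) (fun x => A * x)).
    { intros x _. change (@eq R (A * x) (x * (A * cos ((INR m - INR m) * x) + B * sin ((INR m - INR m) * x)))). replace (INR m - INR m) with 0 by ring. rewrite Rmult_0_l, cos_0, sin_0. ring. }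
    apply (FTC (fun x => A * x^2/2)); [| |field].
    + intros x _. auto_derive; auto. field.
    + intros x _. apply (ex_derive_continuous (K := R_AbsRing) (V := R_NormedModule)). auto_derive; auto.
  - set (c := INR m - INR n). assert (Hc : c <> 0) by (apply INR_neq; auto).
    set (F := fun x => A * (x * sin (c*x) / c + cos (c*x) / c^2) + B * (- x * cos (c*x) / c + sin (c*x)/c^2)).
    assert (Hs : sin (c * (2*PI)) = 0).
    { replace (c * (2*PI)) with (2 * INR m * PI - 2 * INR n * PI) by (unfold c; ring).
      rewrite sin_minus, !sin2k; ring. }
    assert (Hco : cos (c * (2*PI)) = 1).
    { replace (c * (2*PI)) with (2 * INR m * PI - 2 * INR n * PI) by (unfold c; ring).
      rewrite cos_minus, !sin2k, !cos2k; ring. }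
    apply (FTC F).
    3:{ unfold F. rewrite Hs, Hco, !Rmult_0_r, sin_0, cos_0. field; auto. }
    + intros x _. unfold F. auto_derive; auto. field; auto.
    + intros x _. apply (ex_derive_continuous (K := R_AbsRing) (V := R_NormedModule)). auto_derive; auto.
Qed.

Lemma is_RInt_eqv (f : R -> R) a b v w : is_RInt f a b v -> v = w -> is_RInt f a b w.
Proof. intros H ->; exact H. Qed.

Lemma is_RInt_rsum (f : nat -> R -> R) I N a b :
  (forall k, (k < N)%nat -> is_RInt (f k) a b (I k)) ->
  is_RInt (fun x => rsum (fun k => f k x) N) a b (rsum I N).
Proof.
  induction N; intros H; simpl.
  - apply (is_RInt_eqv _ _ _ _ _ (is_RInt_const (V := R_NormedModule) a b 0)).
    exact (scal_zero_r (V := R_NormedModule) (b - a)).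
  - apply (is_RInt_plus (V := R_NormedModule) (fun x => rsum (fun k => f k x) N) (f N)).
    + apply IHN; intros; apply H; lia.
    + apply H; lia.
Qed.

Lemma inv_sqrt2pi : (/ sqrt (2 * PI)) ^ 2 = / (2 * PI).
Proof.
  pose proof PI_RGT_0. assert (0 < sqrt (2*PI)) by (apply sqrt_lt_R0; lra).
  rewrite <- (sqrt_sqrt (2*PI)) at 2 by lra. field. lra.
Qed.

Lemma integrand_eq N a b x : x * phi_abs2 N a b x =
  / (2 * PI) * rsum (fun m => rsum (fun n => x * ((a m * a n + b m * b n) * cos ((INR m - INR n) * x)
      + (a m * b n - b m * a n) * sin ((INR m - INR n) * x))) N) N.
Proof.
  unfold phi_abs2, phi_re, phi_im.
  set (k := / sqrt (2 * PI)).
  set (Rs := rsum _ N). set (Is := rsum _ N).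
  replace ((k * Rs) ^ 2 + (k * Is) ^ 2) with (k ^ 2 * (Rs * Rs + Is * Is)) by ring.
  unfold k; rewrite inv_sqrt2pi. unfold Rs, Is. rewrite !rsum_prod, <- rsum_plus.
  replace (x * (/ (2 * PI) * _)) with (/ (2*PI) * (x * rsum (fun m => rsum (fun n =>
     (a m * cos (INR m * x) - b m * sin (INR m * x)) * (a n * cos (INR n * x) - b n * sin (INR n * x))) N
     + rsum (fun n => (a m * sin (INR m * x) + b m * cos (INR m * x)) * (a n * sin (INR n * x) + b n * cos (INR n * x))) N) N)) by ring.
  f_equal. rewrite rsum_mult_l. apply rsum_ext; intros m _.
  rewrite <- rsum_plus, rsum_mult_l. apply rsum_ext; intros n _.
  replace ((INR m - INR n) * x) with (INR m * x - INR n * x) by ring.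
  rewrite cos_minus, sin_minus. ring.
Qed.

Definition dot N (x y : nat -> R) := rsum (fun m => x m * y m) N.
Definition nsq N (v : nat -> R) := rsum (fun k => v k ^ 2) N.

Lemma rsum_lin3 c d f g h N :
  c * (d * rsum f N - rsum g N + rsum h N) = rsum (fun k => c * (d * f k - g k + h k)) N.
Proof. induction N; simpl; [ring|]. rewrite <- IHN; ring. Qed.

Definition energy_val N a b :=
  PI * rsum (fun k => a k ^ 2 + b k ^ 2) N - dot N a (Tapply N b) + dot N b (Tapply N a).

Lemma energy_is_RInt N a b :
  is_RInt (fun x => x * phi_abs2 N a b x) 0 (2 * PI) (energy_val N a b).
Proof.
  pose proof PI_RGT_0.
  apply (is_RInt_ext (V := R_NormedModule) (fun x => / (2 * PI) * rsum (fun m => rsum (fun n => x * ((a m * a n + b m * b n) * cos ((INR m - INR n) * x)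
      + (a m * b n - b m * a n) * sin ((INR m - INR n) * x))) N) N)).
  { intros x _. symmetry. apply integrand_eq. }
  eapply is_RInt_eqv.
  { apply (is_RInt_scal (V := R_NormedModule) _ _ _ (/ (2 * PI))).
    apply is_RInt_rsum. intros m _. apply is_RInt_rsum. intros n _. apply int_prim. }
  change (scal (/ (2 * PI)) ?y) with (/ (2*PI) * y).
  rewrite (rsum_ext _ (fun m => 2 * PI * (PI * (a m ^ 2 + b m ^ 2) - a m * Tapply N b m + b m * Tapply N a m))).
  2:{ intros m Hm. rewrite rsum_minus.
      rewrite (rsum_diag (fun n => 2 * PI ^ 2 * (a m * a n + b m * b n))) by exact Hm.
      unfold Tapply. rewrite !rsum_mult_l.
      replace (rsum (fun n => 2 * PI * (a m * b n - b m * a n) * Tentry m n) N) with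
        (rsum (fun n => a m * (2*PI) * (Tentry m n * b n) - b m * (2*PI) * (Tentry m n * a n)) N)
        by (apply rsum_ext; intros; ring).
      rewrite rsum_minus, <- !rsum_mult_l. ring. }
  match goal with |- ?x = ?y => change (@eq R x y) end. unfold energy_val, dot. rewrite <- rsum_lin3. field. lra.
Qed.

Lemma energy_RiemannInt N a b (pr : Riemann_integrable (fun x => x * phi_abs2 N a b x) 0 (2 * PI)) :
  RiemannInt pr = energy_val N a b.
Proof. rewrite <- RInt_Reals. apply is_RInt_unique. apply energy_is_RInt. Qed.

Lemma energy_set_iff N r : energy_set N r <->
  exists a b, rsum (fun k => a k ^ 2 + b k ^ 2) N = 1 /\ r = energy_val N a b.
Proof.
  split.
  - intros (a & b & H1 & pr & ->). exists a, b. split; auto. apply energy_RiemannInt.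
  - intros (a & b & H1 & ->). exists a, b. split; auto.
    exists (ex_RInt_Reals_0 _ _ _ (ex_intro _ _ (energy_is_RInt N a b))).
    symmetry; apply energy_RiemannInt.
Qed.

Lemma energy_nonneg N a b : 0 <= energy_val N a b.
Proof.
  pose proof PI_RGT_0.
  rewrite <- (is_RInt_unique _ _ _ _ (energy_is_RInt N a b)).
  apply RInt_ge_0; [lra| eexists; apply energy_is_RInt |].
  intros x Hx. unfold phi_abs2. apply Rmult_le_pos; [lra|].
  apply Rplus_le_le_0_compat; apply pow2_ge_0.
Qed.

Lemma Tapply_scal N c v m : Tapply N (fun k => c * v k) m = c * Tapply N v m.
Proof. unfold Tapply. rewrite rsum_mult_l. apply rsum_ext; intros; ring. Qed.

Lemma dot_scal_l N c x y : dot N (fun k => c * x k) y = c * dot N x y.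
Proof. unfold dot. rewrite rsum_mult_l. apply rsum_ext; intros; ring. Qed.
Lemma dot_scal_r N c x y : dot N x (fun k => c * y k) = c * dot N x y.
Proof. unfold dot. rewrite rsum_mult_l. apply rsum_ext; intros; ring. Qed.
Lemma nsq_scal N c v : nsq N (fun k => c * v k) = c ^ 2 * nsq N v.
Proof. unfold nsq. rewrite rsum_mult_l. apply rsum_ext; intros; ring. Qed.
Lemma dot_self N v : dot N v v = nsq N v.
Proof. apply rsum_ext; intros; ring. Qed.
Lemma nsq_nonneg N v : 0 <= nsq N v.
Proof. apply rsum_nonneg; intros; apply pow2_ge_0. Qed.

Lemma Tentry_anti m n : Tentry n m = - Tentry m n.
Proof.
  unfold Tentry. destruct (Nat.eq_dec n m), (Nat.eq_dec m n); try lia; [ring|].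
  pose proof (INR_neq m n ltac:(auto)). field. split; lra.
Qed.

Lemma rsum_opp f N : - rsum f N = rsum (fun k => - f k) N.
Proof. induction N; simpl; [ring|]. rewrite <- IHN; ring. Qed.

Lemma dot_anti N x y : dot N x (Tapply N y) = - dot N y (Tapply N x).
Proof.
  unfold dot, Tapply. rewrite !(rsum_ext (fun m => _ * rsum _ N) _ N (fun m _ => rsum_mult_l _ _ _)).
  rewrite rsum_swap. rewrite rsum_opp.
  apply rsum_ext; intros n _. rewrite rsum_opp. apply rsum_ext; intros m _.
  rewrite (Tentry_anti m n). ring.
Qed.

Lemma dotT_scal N c x y : dot N x (Tapply N (fun k => c * y k)) = c * dot N x (Tapply N y).
Proof. unfold dot. rewrite rsum_mult_l. apply rsum_ext; intros. rewrite Tapply_scal; ring. Qed.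

Lemma construct N v : nsq N v = 1 -> energy_set N (PI - enorm N (Tapply N v)).
Proof.
  intros Hv. apply energy_set_iff. set (w := Tapply N v).
  assert (Ht : enorm N w = sqrt (nsq N w)) by reflexivity.
  destruct (Req_dec (nsq N w) 0) as [H0|H0].
  - exists v, (fun _ => 0). split.
    + rewrite <- Hv. apply rsum_ext; intros; ring.
    + rewrite Ht, H0, sqrt_0. unfold energy_val, dot.
      rewrite (rsum_zero (fun m => v m * Tapply N (fun _ => 0) m)).
      2:{ intros m _. unfold Tapply. rewrite rsum_zero; [ring|intros; ring]. }
      rewrite (rsum_zero (fun m => 0 * Tapply N v m)) by (intros; ring).
      replace (rsum (fun k => v k ^ 2 + 0 ^ 2) N) with (nsq N v) by (apply rsum_ext; intros; ring).
      rewrite Hv. ring.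
  - pose proof (nsq_nonneg N w).
    set (t := enorm N w).
    assert (Htp : 0 < t) by (unfold t; rewrite Ht; apply sqrt_lt_R0; lra).
    assert (Ht2 : t * t = nsq N w) by (unfold t; rewrite Ht; apply sqrt_sqrt; lra).
    assert (Hs2 : 0 < sqrt 2) by (apply sqrt_lt_R0; lra).
    assert (Hs22 : sqrt 2 * sqrt 2 = 2) by (apply sqrt_sqrt; lra).
    set (s := / sqrt 2). set (c := - / (sqrt 2 * t)).
    exists (fun k => s * v k), (fun k => c * w k). split.
    + rewrite rsum_plus. change (nsq N (fun k => s * v k) + nsq N (fun k => c * w k) = 1).
      rewrite !nsq_scal, Hv, <- Ht2. unfold s, c.
      replace ((/ sqrt 2) ^ 2) with (/ (sqrt 2 * sqrt 2)) by (field; lra).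
      replace ((- / (sqrt 2 * t)) ^ 2) with (/ (sqrt 2 * sqrt 2) / (t * t)) by (field; lra).
      rewrite Hs22. field. lra.
    + unfold energy_val. rewrite rsum_plus.
      change (PI - t = PI * (nsq N (fun k => s * v k) + nsq N (fun k => c * w k)) -
        dot N (fun k => s * v k) (Tapply N (fun k => c * w k)) + dot N (fun k => c * w k) (Tapply N (fun k => s * v k))).
      rewrite !nsq_scal.
      rewrite !dotT_scal, !dot_scal_l. fold w.
      rewrite dot_anti, !dot_self, Hv, <- Ht2.
      unfold s, c.
      replace ((/ sqrt 2) ^ 2) with (/ (sqrt 2 * sqrt 2)) by (field; lra).
      replace ((- / (sqrt 2 * t)) ^ 2) with (/ (sqrt 2 * sqrt 2) / (t * t)) by (field; lra).
      fold w. rewrite <- Ht2.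
      replace (- / (sqrt 2 * t) * (/ sqrt 2 * - (t*t))) with (t * t / (sqrt 2 * sqrt 2) / t) by (field; lra).
      replace (/ sqrt 2 * (- / (sqrt 2 * t) * (t * t))) with (- (t*t) / (sqrt 2 * sqrt 2) / t) by (field; lra).
      rewrite Hs22. field. lra.
Qed.

Lemma enorm_1 N v : enorm N v = 1 -> nsq N v = 1.
Proof. unfold enorm; intros H. pose proof (sqrt_sqrt (nsq N v) (nsq_nonneg N v)). fold (nsq N v) in H. rewrite H in H0. lra. Qed.
Lemma enorm_1' N v : nsq N v = 1 -> enorm N v = 1.
Proof. unfold enorm; intros H. fold (nsq N v). rewrite H. apply sqrt_1. Qed.

Lemma key_ineq n x z : 0 < n -> 2 * (x * z) <= n * x ^ 2 + z ^ 2 * / n /\ - (n * x ^ 2 + z ^ 2 * / n) <= 2 * (x * z).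
Proof.
  intros Hn. assert (E1 : n * x ^ 2 + z ^ 2 * / n - 2 * (x * z) = (n * x - z) ^ 2 * / n) by (field; lra).
  assert (E2 : n * x ^ 2 + z ^ 2 * / n + 2 * (x * z) = (n * x + z) ^ 2 * / n) by (field; lra).
  assert (0 <= (n * x - z) ^ 2 * / n) by (apply Rmult_le_pos; [apply pow2_ge_0| left; apply Rinv_0_lt_compat; lra]).
  assert (0 <= (n * x + z) ^ 2 * / n) by (apply Rmult_le_pos; [apply pow2_ge_0| left; apply Rinv_0_lt_compat; lra]).
  lra.
Qed.

Lemma dot_bound N nrm (Hn : 0 <= nrm) (Hh : forall y, nsq N (Tapply N y) <= nrm ^ 2 * nsq N y) x y :
  - (nrm / 2 * (nsq N x + nsq N y)) <= dot N x (Tapply N y) <= nrm / 2 * (nsq N x + nsq N y).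
Proof.
  pose proof (nsq_nonneg N x). pose proof (nsq_nonneg N y).
  destruct (Req_dec nrm 0) as [->|Hnz].
  - assert (Hz : nsq N (Tapply N y) = 0) by (pose proof (Hh y); pose proof (nsq_nonneg N (Tapply N y)); nra).
    pose proof (rsum_nonneg_zero _ N (fun k _ => pow2_ge_0 (Tapply N y k)) Hz) as Hk.
    unfold dot. rewrite rsum_zero. 2:{ intros k Hk'. specialize (Hk k Hk'). assert (Tapply N y k = 0) by nra. rewrite H1; ring. }
    lra.
  - assert (Hp : 0 < nrm) by lra.
    assert (Hs : rsum (fun k => nrm * x k ^ 2 + Tapply N y k ^ 2 * / nrm) N = nrm * nsq N x + nsq N (Tapply N y) * / nrm).
    { rewrite rsum_plus, <- rsum_mult_l, <- rsum_mult_r. reflexivity. }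
    assert (Hd : 2 * dot N x (Tapply N y) = rsum (fun k => 2 * (x k * Tapply N y k)) N) by (unfold dot; apply rsum_mult_l).
    assert (Hup : rsum (fun k => 2 * (x k * Tapply N y k)) N <= rsum (fun k => nrm * x k ^ 2 + Tapply N y k ^ 2 * / nrm) N)
      by (apply rsum_le; intros; apply key_ineq; auto).
    assert (Hlo : rsum (fun k => - (nrm * x k ^ 2 + Tapply N y k ^ 2 * / nrm)) N <= rsum (fun k => 2 * (x k * Tapply N y k)) N)
      by (apply rsum_le; intros; apply key_ineq; auto).
    rewrite <- rsum_opp in Hlo.
    pose proof (Hh y).
    assert (nsq N (Tapply N y) * / nrm <= nrm * nsq N y).
    { apply (Rmult_le_reg_r nrm); auto. rewrite Rmult_assoc, Rinv_l by lra. nra. }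
    lra.
Qed.

Lemma homog N nrm (Hlub : is_lub (opnorm_set N) nrm) (Hn : 0 <= nrm) y :
  nsq N (Tapply N y) <= nrm ^ 2 * nsq N y.
Proof.
  pose proof (nsq_nonneg N y) as Hy. pose proof (nsq_nonneg N (Tapply N y)) as HTy.
  destruct (Req_dec (nsq N y) 0) as [H0|H0].
  - pose proof (rsum_nonneg_zero _ N (fun k _ => pow2_ge_0 (y k)) H0) as Hk.
    rewrite H0. unfold nsq at 1. rewrite rsum_zero; [lra|]. intros m _.
    unfold Tapply. rewrite rsum_zero; [ring|]. intros k Hk'. specialize (Hk k Hk').
    assert (y k = 0) by nra. rewrite H; ring.
  - set (s := nsq N y). assert (Hs : 0 < s) by (unfold s; lra).
    assert (Hq : 0 < sqrt s) by (apply sqrt_lt_R0; lra).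
    assert (Hqq : sqrt s * sqrt s = s) by (apply sqrt_sqrt; lra).
    set (q := / sqrt s).
    assert (Hv : nsq N (fun k => q * y k) = 1).
    { rewrite nsq_scal. fold s. unfold q. replace ((/ sqrt s) ^ 2) with (/ (sqrt s * sqrt s)) by (field; lra).
      rewrite Hqq. field. lra. }
    assert (Hle : enorm N (Tapply N (fun k => q * y k)) <= nrm).
    { apply (proj1 Hlub). exists (fun k => q * y k). split; auto. apply enorm_1'; auto. }
    unfold enorm in Hle.
    rewrite (rsum_ext _ (fun k => (q * Tapply N y k) ^ 2)) in Hle by (intros; rewrite Tapply_scal; reflexivity).
    fold (nsq N (fun k => q * Tapply N y k)) in Hle. rewrite nsq_scal in Hle.
    assert (Hq2 : q ^ 2 = / s) by (unfold q; replace ((/ sqrt s) ^ 2) with (/ (sqrt s * sqrt s)) by (field; lra); rewrite Hqq; reflexivity).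
    rewrite Hq2 in Hle.
    assert (0 <= / s * nsq N (Tapply N y)) by (apply Rmult_le_pos; [left; apply Rinv_0_lt_compat|]; lra).
    pose proof (sqrt_sqrt _ H).
    assert (/ s * nsq N (Tapply N y) <= nrm ^ 2).
    { rewrite <- H1. pose proof (sqrt_pos (/ s * nsq N (Tapply N y))). nra. }
    apply (Rmult_le_reg_l (/ s)); [apply Rinv_0_lt_compat; lra|].
    replace (/ s * (nrm ^ 2 * s)) with (nrm ^ 2) by (field; lra). exact H2.
Qed.

Theorem mainTheorem15 (N : nat) (hN : (1 <= N)%nat) :
  exists nrm : R, is_lub (opnorm_set N) nrm /\ is_glb (energy_set N) (PI - nrm).
Proof.
  pose proof PI_RGT_0 as HPI.
  assert (Hb : forall r, opnorm_set N r -> r <= PI).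
  { intros r (v & Hv & ->). pose proof (construct N v (enorm_1 N v Hv)) as He.
    apply energy_set_iff in He. destruct He as (a & b & _ & He).
    pose proof (energy_nonneg N a b). lra. }
  set (v0 := fun k : nat => if Nat.eq_dec k 0 then 1 else 0).
  assert (Hv0 : nsq N v0 = 1).
  { unfold nsq. rewrite (rsum_ext _ (fun n => if Nat.eq_dec 0 n then 1 else 0)).
    - apply (rsum_diag (fun _ => 1) N 0). lia.
    - intros k _. unfold v0. destruct (Nat.eq_dec k 0), (Nat.eq_dec 0 k); try lia; ring. }
  destruct (completeness (opnorm_set N)) as [nrm Hlub].
  { exists PI. intros r Hr. apply Hb; auto. }
  { exists (enorm N (Tapply N v0)). exists v0. split; auto. apply enorm_1'; auto. }
  exists nrm. split; auto.
  assert (Hn : 0 <= nrm).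
  { apply Rle_trans with (enorm N (Tapply N v0)). apply sqrt_pos.
    apply (proj1 Hlub). exists v0. split; auto. apply enorm_1'; auto. }
  pose proof (homog N nrm Hlub Hn) as Hh.
  split.
  - intros r Hr. apply energy_set_iff in Hr. destruct Hr as (a & b & H1 & ->).
    unfold energy_val. rewrite H1.
    pose proof (dot_bound N nrm Hn Hh a b). pose proof (dot_bound N nrm Hn Hh b a).
    rewrite rsum_plus in H1. fold (nsq N a) (nsq N b) in H1.
    rewrite (Rplus_comm (nsq N b)) in H0. rewrite H1 in H, H0. lra.
  - intros beta Hbeta.
    assert (nrm <= PI - beta).
    { apply (proj2 Hlub). intros r (v & Hv & ->).
      pose proof (Hbeta _ (construct N v (enorm_1 N v Hv))). lra. }
    lra.
Qed.
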